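(* Let $\mathcal C$ be a depth-$\Delta$ Clifford circuit on $n$ qubits with linear outcome code $\mathcal O(\mathcal C)$. The group of all operators in $\overline{\mathcal P}_{n(\Delta+1)}$ that commute with every $\overleftarrow{F(u)}$, $u\in\mathcal O(\mathcal C)^\perp$ (the stabilizers and logical operators of the spacetime code), is generated by: (i) the operators $\eta_{\Delta+0.5}(P)$, $P$ ranging over a basis of $\overline{\mathcal P}_n$; (ii) for each $\ell=1,\dots,\Delta$, the operators $G(P,\ell)$, $P$ ranging over a basis of the space of Pauli operators in $\overline{\mathcal P}_n$ commuting with all operators measured at level $\ell$; (iii) the operators $L(v)$, $v$ ranging over a basis of $\mathcal O(\mathcal C)$.
   Context: A Clifford circuit on $n$ qubits is a finite sequence of operations, each a unitary Clifford gate or the measurement of a Hermitian $n$-qubit Pauli, each with a level in $\{1,2,\dots\}$; operations of equal level have disjoint supports and levels are nondecreasing; depth $\Delta$ = maximal level. In circuit order the $j$-th measurement measures $S_j$ at level $\ell_j$ ($j=1,\dots,m$); outcome $o_j=0$ for eigenvalue $+1$, $1$ for $-1$. The outcome code $\mathcal O(\mathcal C)\subseteq\mathbb Z_2^m$ is the set of outcome bit-strings occurring with nonzero probability for some input state; $\perp$ refers to $(u|v)=\sum u_iv_i\bmod2$. $\overline{\mathcal P}_N$ is the $N$-qubit Pauli group modulo phases. $U_\ell$ is the product of the unitary gates of level $\ell$ (identity if none). Fault operators $F\in\overline{\mathcal P}_{n(\Delta+1)}$ act on qubits $(\ell+0.5,q)$, $0\le\ell\le\Delta$, $1\le q\le n$,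 with level components $F_{\ell+0.5}$; $\eta_{\ell+0.5}(P)$ is $P$ at level $\ell+0.5$ and $I$ elsewhere. Back-cumulant $\overleftarrow F$: start with $F$; for $\ell=\Delta,\dots,1$ replace $\overleftarrow F_{\ell-0.5}$ by $\overleftarrow F_{\ell-0.5}\cdot U_\ell^{-1}\overleftarrow F_{\ell+0.5}U_\ell$. $F(u)=\prod_j\eta_{\ell_j-0.5}(S_j^{u_j})$. For $1\le\ell\le\Delta$ and $P\in\overline{\mathcal P}_n$, $G(P,\ell)=\eta_{\ell-0.5}(P)\,\eta_{\ell+0.5}(U_\ell PU_\ell^{-1})$. For each $j$, fix a Pauli operator $P_j\in\overline{\mathcal P}_n$ supported within the support of $S_j$ and anticommuting with $S_j$; for $v\in\mathbb Z_2^m$, $L(v)=\prod_{j=1}^m G(P_j,\ell_j)^{v_j}$. *)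

(* Defs.v *)
From HB Require Import structures.
From mathcomp Require Import all_boot all_order all_algebra.
From mathcomp Require Import algC.
Set Implicit Arguments. Unset Strict Implicit. Unset Printing Implicit Defensive.
Import Order.TTheory GRing.Theory Num.Theory.
Local Open Scope ring_scope.

(* Pauli operators modulo phases on n qubits: vectors (x | z) in F_2^(n+n).  *)
(* The group law of Pbar_n is vector addition.                              *)
Definition pauli (n : nat) := 'rV['F_2]_(n + n).

Definition xbit n (p : pauli n) (j : 'I_n) : bool := p 0 (lshift n j) != 0.
Definition zbit n (p : pauli n) (j : 'I_n) : bool := p 0 (rshift n j) != 0.

Definition psupp n (p : pauli n) : {set 'I_n} := [set j | xbit p j || zbit p j].

(* symplectic form: 0 iff (any representatives of) p and q commute *)
Definition symp n (p q : pauli n) : 'F_2 :=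
  \sum_(j < n) (p 0 (lshift n j) * q 0 (rshift n j) + p 0 (rshift n j) * q 0 (lshift n j)).

Definition kbit (k : nat) (j : nat) : bool := odd (k %/ 2 ^ j).

(* Hermitian representative  i^(x.z) X^x Z^z  of the Pauli class p *)
Definition pmx n (p : pauli n) : 'M[algC]_(2 ^ n) :=
  \matrix_(r, c)
    (if [forall j : 'I_n, kbit r j == (kbit c j (+) xbit p j)]
     then 'i ^+ #|[set j : 'I_n | xbit p j && zbit p j]|
          * (-1) ^+ #|[set j : 'I_n | zbit p j && kbit c j]|
     else 0).

Definition sgnC (b : bool) : algC := if b then -1 else 1.

(* M is a scalar multiple of the Pauli matrix Q (Q is an involution) *)
Definition proportional n (M Q : 'M[algC]_(2 ^ n)) : bool :=
  M == (\tr (Q *m M) / (2 ^ n)%:R) *: Q.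

Definition conjP n (U : 'M[algC]_(2 ^ n)) (p : pauli n) : pauli n :=
  odflt 0 [pick q : pauli n | proportional (U *m pmx p *m invmx U) (pmx q)].

(* A gate carries a (declared) support A and its unitary matrix U; U must act *)
(* trivially outside A.  A measurement of the Hermitian Pauli                *)
(* (-1)^s * pmx p is written Meas s p.                                       *)
Inductive op (n : nat) :=
| Gate of {set 'I_n} & 'M[algC]_(2 ^ n)
| Meas of bool & pauli n.

(* a circuit: operations in circuit order, each with its level *)
Definition circuit (n : nat) := seq (nat * op n).

Definition op_supp n (o : op n) : {set 'I_n} :=
  match o with Gate A _ => A | Meas _ p => psupp p end.

Definition conjT n (U : 'M[algC]_(2 ^ n)) := (map_mx Num.conj U)^T.

Definition clifford_gate n (A : {set 'I_n}) (U : 'M[algC]_(2 ^ n)) : Prop :=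
  [/\ U *m conjT U = 1,
      (forall p : pauli n, exists q : pauli n,
           proportional (U *m pmx p *m invmx U) (pmx q)) &
      (forall p : pauli n, psupp p \subset ~: A -> U *m pmx p = pmx p *m U)].

Definition nth_op n (C : circuit n) (i : nat) : nat * op n :=
  nth (0%N, Meas false 0) C i.

Definition wf_circuit n (C : circuit n) : Prop :=
  [/\
      (forall i, (i < size C)%N -> (0 < (nth_op C i).1)%N),
      sorted leq (map fst C),
      (forall i j : nat, (i < j < size C)%N ->
         (nth_op C i).1 = (nth_op C j).1 ->
         [disjoint op_supp (nth_op C i).2 & op_supp (nth_op C j).2]) &
      (forall i A U, (i < size C)%N -> (nth_op C i).2 = Gate A U ->
         clifford_gate A U)].

Definition depth n (C : circuit n) : nat := \max_(o <- C) o.1.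

(* U_l : product of the unitary gates of level l (later gates on the left) *)
Definition Ulev n (C : circuit n) (l : nat) : 'M[algC]_(2 ^ n) :=
  foldl (fun M o => match o with
                    | (l', Gate _ U) => if l' == l then U *m M else M
                    | _ => M end) 1 C.

Definition meas_of n (C : circuit n) : seq (nat * bool * pauli n) :=
  pmap (fun o : nat * op n => match o.2 with
                              | Meas s p => Some (o.1, s, p)
                              | _ => None end) C.

Definition nmeas n (C : circuit n) : nat := size (meas_of C).

Definition mlev n (C : circuit n) (j : 'I_(nmeas C)) : nat :=
  (nth (0%N, false, 0) (meas_of C) j).1.1.
Definition msgn n (C : circuit n) (j : 'I_(nmeas C)) : bool :=
  (nth (0%N, false, 0) (meas_of C) j).1.2.
Definition mpauli n (C : circuit n) (j : 'I_(nmeas C)) : pauli n :=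
  (nth (0%N, false, 0) (meas_of C) j).2.

Definition proj n (b : bool) (p : pauli n) : 'M[algC]_(2 ^ n) :=
  2^-1 *: (1 + sgnC b *: pmx p).

(* Kraus operator of the circuit for the outcome bits o (j-th measurement
   gets o j); the operation performed first is rightmost. *)
Fixpoint kraus_aux n (ops : circuit n) (o : nat -> bool) (j : nat)
  : 'M[algC]_(2 ^ n) :=
  match ops with
  | [::] => 1
  | (_, Gate _ U) :: ops' => kraus_aux ops' o j *m U
  | (_, Meas s p) :: ops' => kraus_aux ops' o j.+1 *m proj (s (+) o j) p
  end.

Definition obit m (o : 'rV['F_2]_m) (j : nat) : bool :=
  match insub j with Some k => o 0 k != 0 | None => false end.

(* o occurs with nonzero probability for some (pure) input state psi *)
Definition outcome n (C : circuit n) (o : 'rV['F_2]_(nmeas C)) : Prop :=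
  exists psi : 'cV[algC]_(2 ^ n), kraus_aux C (obit o) 0 *m psi != 0.

Definition dotF2 m (u v : 'rV['F_2]_m) : 'F_2 := \sum_(j < m) u 0 j * v 0 j.

(* Spacetime operators: F : 'M_(Delta+1, n+n), row k = component at level   *)
(* k + 0.5.                                                                  *)
Definition stop n (C : circuit n) := 'M['F_2]_((depth C).+1, n + n).

Definition st_symp n (C : circuit n) (X Y : stop C) : 'F_2 :=
  \sum_(k < (depth C).+1) symp (row k X) (row k Y).

Definition etaST n (C : circuit n) (k : nat) (P : pauli n) : stop C :=
  \matrix_(i < (depth C).+1) (if (i == k :> nat) then P else 0).

Definition back_step n (C : circuit n) (l : nat) (F : stop C) : stop C :=
  \matrix_(k < (depth C).+1)
    (if (k == l.-1 :> nat)
     then row k F + conjP (invmx (Ulev C l)) (row (inord l) F)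
     else row k F).

Definition backcum n (C : circuit n) (F : stop C) : stop C :=
  foldl (fun G l => back_step l G) F (rev (iota 1 (depth C))).

Definition Fu n (C : circuit n) (u : 'rV['F_2]_(nmeas C)) : stop C :=
  \sum_(j < nmeas C) u 0 j *: etaST C (mlev j).-1 (mpauli j).

Definition Gop n (C : circuit n) (P : pauli n) (l : nat) : stop C :=
  etaST C l.-1 P + etaST C l (conjP (Ulev C l) P).

Definition Lop n (C : circuit n) (Pj : 'I_(nmeas C) -> pauli n)
  (v : 'rV['F_2]_(nmeas C)) : stop C :=
  \sum_(j < nmeas C) v 0 j *: Gop C (Pj j) (mlev j).

Definition comm_level n (C : circuit n) (l : nat) (P : pauli n) : Prop :=
  forall j : 'I_(nmeas C), mlev j = l -> symp P (mpauli j) = 0.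

(* Main.v *)
Require Import Defs.
From HB Require Import structures.
From mathcomp Require Import all_boot all_order all_algebra.
From mathcomp Require Import algC zify.
Set Implicit Arguments. Unset Strict Implicit. Unset Printing Implicit Defensive.
Import Order.TTheory GRing.Theory Num.Theory.
Local Open Scope ring_scope.

Lemma kbit0 k : kbit k 0 = odd k.
Proof. by rewrite /kbit expn0 divn1. Qed.

Lemma kbitS k j : kbit k j.+1 = kbit (k %/ 2) j.
Proof. by rewrite /kbit expnS divnMA. Qed.

Lemma exists_idx_nat (n : nat) (f : nat -> bool) :
  exists k, (k < 2 ^ n)%N /\ forall j, (j < n)%N -> kbit k j = f j.
Proof.
elim: n => [|n [k [Hk Hb]]]; first by exists 0%N; split.
exists (k + f n * 2 ^ n)%N; split.
  rewrite expnS; case: (f n) => /=; lia.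
move=> j; rewrite ltnS leq_eqVlt => /orP[/eqP->|Hj].
  rewrite /kbit divnDr ?dvdn_mull // divn_small // add0n mulnK ?expn_gt0 //.
  by case: (f n).
rewrite /kbit -(subnK (ltnW Hj)) expnD mulnA divnDMl ?expn_gt0 // oddD.
rewrite -/(kbit k j) Hb // oddM oddX.
have -> : (n - j == 0)%N = false by apply/negbTE; rewrite subn_eq0 -ltnNge.
by rewrite /= andbF addbF.
Qed.

Lemma uniq_idx_nat (n : nat) k k' : (k < 2 ^ n)%N -> (k' < 2 ^ n)%N ->
  (forall j, (j < n)%N -> kbit k j = kbit k' j) -> k = k'.
Proof.
elim: n k k' => [|n IH] k k'; first by rewrite expn0 !ltnS !leqn0 => /eqP-> /eqP->.
move=> Hk Hk' Hb.
have E : (k %/ 2 = k' %/ 2)%N.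
  apply: IH.
  - by rewrite ltn_divLR // -expnSr.
  - by rewrite ltn_divLR // -expnSr.
  by move=> j Hj; rewrite -!kbitS Hb.
have O : odd k = odd k' by rewrite -!kbit0 Hb.
by rewrite (divn_eq k 2) (divn_eq k' 2) E !modn2 O.
Qed.

Lemma exists_idx n (f : 'I_n -> bool) : exists k : 'I_(2 ^ n), forall j : 'I_n, kbit k j = f j.
Proof.
have [k [Hk Hb]] := exists_idx_nat n (fun j => match insub j with Some j' => f j' | None => false end).
exists (Ordinal Hk) => j /=; rewrite Hb //. by rewrite valK.
Qed.

Lemma uniq_idx n (k k' : 'I_(2 ^ n)) : (forall j : 'I_n, kbit k j = kbit k' j) -> k = k'.
Proof.
move=> H; apply: val_inj; apply: (uniq_idx_nat (ltn_ord k) (ltn_ord k')).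
by move=> j Hj; apply: (H (Ordinal Hj)).
Qed.

Definition om n (p : pauli n) : algC := 'i ^+ #|[set j : 'I_n | xbit p j && zbit p j]|.
Definition sgF (a : 'F_2) : algC := sgnC (a != 0).

Lemma sgn_card n (P : pred 'I_n) :
  (-1) ^+ #|[set j : 'I_n | P j]| = \prod_(j < n) sgnC (P j) :> algC.
Proof.
rewrite -big_mkcond /= prodr_const cardsE //.
Qed.

Lemma pmxE n (p : pauli n) r c : pmx p r c =
  if [forall j : 'I_n, kbit r j == kbit c j (+) xbit p j]
  then om p * \prod_(j < n) sgnC (zbit p j && kbit c j) else 0.
Proof. by rewrite mxE sgn_card. Qed.

Lemma pmx_mulE n (p q : pauli n) r c : (pmx p *m pmx q) r c =
  if [forall j : 'I_n, kbit r j == kbit c j (+) xbit q j (+) xbit p j]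
  then om p * om q * \prod_(j < n)
     (sgnC (zbit p j && (kbit c j (+) xbit q j)) * sgnC (zbit q j && kbit c j))
  else 0.
Proof.
have [k0 Hk0] := exists_idx (fun j => kbit c j (+) xbit q j).
rewrite mxE (bigD1 k0) //= big1 ?addr0; last first.
  move=> k Hk; rewrite (pmxE q); case: ifP; last by rewrite mulr0.
  move=> /forallP H; case/eqP: Hk; apply: uniq_idx => j.
  by rewrite Hk0; apply/eqP.
rewrite !pmxE.
have -> : [forall j : 'I_n, kbit k0 j == kbit c j (+) xbit q j].
  by apply/forallP => j; rewrite Hk0.
have -> : [forall j : 'I_n, kbit r j == kbit k0 j (+) xbit p j] =
          [forall j : 'I_n, kbit r j == kbit c j (+) xbit q j (+) xbit p j].
  by apply: eq_forallb => j; rewrite Hk0.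
case: ifP => _; last by rewrite mul0r.
rewrite big_split /=.
under eq_bigr => j _ do rewrite Hk0.
by rewrite -!mulrA; congr (_ * _); rewrite mulrCA.
Qed.

From mathcomp Require Import ring.

Lemma F2_cases (a : 'F_2) : a = 0 \/ a = 1.
Proof. case: a => -[|[|m]] Hm; [left|right|]; try by apply: val_inj. by []. Qed.

Lemma F2_addb (a b : 'F_2) : (a + b != 0) = (a != 0) (+) (b != 0).
Proof. by case: (F2_cases a) => ->; case: (F2_cases b) => ->. Qed.
Lemma F2_mulb (a b : 'F_2) : (a * b != 0) = (a != 0) && (b != 0).
Proof. by case: (F2_cases a) => ->; case: (F2_cases b) => ->. Qed.

Lemma xbitD n (p q : pauli n) j : xbit (p + q) j = xbit p j (+) xbit q j.
Proof. by rewrite /xbit mxE F2_addb. Qed.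
Lemma zbitD n (p q : pauli n) j : zbit (p + q) j = zbit p j (+) zbit q j.
Proof. by rewrite /zbit mxE F2_addb. Qed.

Lemma sgF_add a b : sgF (a + b) = sgF a * sgF b.
Proof. by rewrite /sgF F2_addb; case: (a != 0); case: (b != 0); rewrite /sgnC /=; ring. Qed.

Lemma sgF_sum n (F : 'I_n -> 'F_2) : sgF (\sum_j F j) = \prod_j sgF (F j).
Proof. by apply: (big_morph sgF sgF_add); rewrite /sgF eqxx. Qed.

Lemma sgF_symp n (p q : pauli n) : sgF (symp p q) =
  \prod_(j < n) (sgnC (xbit p j && zbit q j) * sgnC (zbit p j && xbit q j)).
Proof. by rewrite sgF_sum; apply: eq_bigr => j _; rewrite sgF_add /sgF !F2_mulb. Qed.

Lemma sgnC_neq0 b : sgnC b != 0.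
Proof. by case: b; rewrite /sgnC ?oppr_eq0 oner_eq0. Qed.

Lemma om_neq0 n (p : pauli n) : om p != 0.
Proof. by rewrite /om expf_neq0 // neq0Ci. Qed.

Lemma pmx_comm n (p q : pauli n) : pmx p *m pmx q = sgF (symp p q) *: (pmx q *m pmx p).
Proof.
apply/matrixP => r c; rewrite pmx_mulE mxE pmx_mulE.
have -> : [forall j : 'I_n, kbit r j == kbit c j (+) xbit p j (+) xbit q j] =
          [forall j : 'I_n, kbit r j == kbit c j (+) xbit q j (+) xbit p j].
  by apply: eq_forallb => j; rewrite addbAC.
case: ifP => _; last by rewrite mulr0.
rewrite sgF_symp [om q * om p]mulrC mulrCA -!mulrA; congr (_ * _); congr (_ * _).
rewrite -big_split; apply: eq_bigr => j _ /=.
by case: (zbit p j); case: (xbit q j); case: (zbit q j); case: (xbit p j); case: (kbit c j);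
  rewrite /sgnC /=; ring.
Qed.

Lemma pmx_sq n (p : pauli n) : pmx p *m pmx p = 1.
Proof.
apply/matrixP => r c; rewrite pmx_mulE mxE.
have -> : [forall j : 'I_n, kbit r j == kbit c j (+) xbit p j (+) xbit p j] = (r == c).
  apply/forallP/eqP => [H|->] ; last by move=> j; rewrite -addbA addbb addbF.
  by apply: uniq_idx => j; move/eqP: (H j) ->; rewrite -addbA addbb addbF.
case: eqP => _ //.
have -> : \prod_(j < n) (sgnC (zbit p j && (kbit c j (+) xbit p j)) * sgnC (zbit p j && kbit c j))
   = \prod_(j < n) sgnC (xbit p j && zbit p j).
  apply: eq_bigr => j _.
  by case: (zbit p j); case: (xbit p j); case: (kbit c j); rewrite /sgnC /=; ring.
rewrite -sgn_card /om -exprMn -expr2 sqrCi -exprMn mulrNN mulr1 expr1n //.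
Qed.

Lemma pmx_unit n (p : pauli n) : pmx p \in unitmx.
Proof. by case: (mulmx1_unit (pmx_sq p)). Qed.

Definition pscal n (p q : pauli n) : algC :=
  om p * om q * \prod_(j < n) sgnC (zbit p j && xbit q j) / om (p + q).

Lemma pscal_neq0 n (p q : pauli n) : pscal p q != 0.
Proof.
rewrite /pscal !mulf_neq0 ?invr_eq0 ?om_neq0 //.
by rewrite prodf_seq_neq0; apply/allP => j _; rewrite sgnC_neq0.
Qed.

Lemma pmx_mul n (p q : pauli n) : pmx p *m pmx q = pscal p q *: pmx (p + q).
Proof.
apply/matrixP => r c; rewrite pmx_mulE mxE pmxE.
have -> : [forall j : 'I_n, kbit r j == kbit c j (+) xbit (p + q) j] =
          [forall j : 'I_n, kbit r j == kbit c j (+) xbit q j (+) xbit p j].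
  by apply: eq_forallb => j; rewrite xbitD -addbA [xbit p j (+) _]addbC.
case: ifP => _; last by rewrite mulr0.
rewrite /pscal [RHS]mulrA divfK ?om_neq0 // -!mulrA; congr (_ * _); congr (_ * _).
rewrite -big_split; apply: eq_bigr => j _ /=; rewrite zbitD.
by case: (zbit p j); case: (xbit q j); case: (zbit q j); case: (kbit c j);
  rewrite /sgnC /=; ring.
Qed.

Lemma sympDl n (p q r : pauli n) : symp (p + q) r = symp p r + symp q r.
Proof.
rewrite /symp -big_split; apply: eq_bigr => j _ /=; rewrite !mxE; ring.
Qed.
Lemma sympDr n (p q r : pauli n) : symp r (p + q) = symp r p + symp r q.
Proof.
rewrite /symp -big_split; apply: eq_bigr => j _ /=; rewrite !mxE; ring.
Qed.
Lemma sympZl n a (p r : pauli n) : symp (a *: p) r = a * symp p r.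
Proof.
rewrite /symp mulr_sumr; apply: eq_bigr => j _ /=; rewrite !mxE; ring.
Qed.
Lemma sympZr n a (p r : pauli n) : symp r (a *: p) = a * symp r p.
Proof.
rewrite /symp mulr_sumr; apply: eq_bigr => j _ /=; rewrite !mxE; ring.
Qed.
Lemma symp0l n (r : pauli n) : symp 0 r = 0.
Proof. by rewrite /symp big1 // => j _; rewrite !mxE !mul0r addr0. Qed.
Lemma symp0r n (r : pauli n) : symp r 0 = 0.
Proof. by rewrite /symp big1 // => j _; rewrite !mxE !mulr0 addr0. Qed.

Lemma symp_delta_r n (p : pauli n) j : symp p (delta_mx 0 (rshift n j)) = p 0 (lshift n j).
Proof.
rewrite /symp (bigD1 j) //= big1 ?addr0.
  rewrite !mxE !eqxx /=.
  have -> : (lshift n j == rshift n j) = false.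
    by apply/negbTE; apply/eqP => /(congr1 val) /= E; have := ltn_ord j; lia.
  by rewrite mulr0 addr0 mulr1.
move=> i Hij; rewrite !mxE /=.
have -> : (lshift n i == rshift n j) = false.
  by apply/negbTE; apply/eqP => /(congr1 val) /= E; have := ltn_ord i; lia.
have -> : (rshift n i == rshift n j) = false.
  by apply/negbTE; apply/eqP => /(congr1 val) /= E; move/eqP: Hij; apply; apply: val_inj; exact: addnI E.
by rewrite /= !mulr0 addr0.
Qed.

Lemma symp_delta_l n (p : pauli n) j : symp p (delta_mx 0 (lshift n j)) = p 0 (rshift n j).
Proof.
rewrite /symp (bigD1 j) //= big1 ?addr0.
  rewrite !mxE !eqxx /=.
  have -> : (rshift n j == lshift n j) = false.
    by apply/negbTE; apply/eqP => /(congr1 val) /= E; have := ltn_ord j; lia.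
  by rewrite mulr0 add0r mulr1.
move=> i Hij; rewrite !mxE /=.
have -> : (rshift n i == lshift n j) = false.
  by apply/negbTE; apply/eqP => /(congr1 val) /= E; have := ltn_ord j; lia.
have -> : (lshift n i == lshift n j) = false.
  by apply/negbTE; apply/eqP => /(congr1 val) /= E; move/eqP: Hij; apply; apply: val_inj.
by rewrite /= !mulr0 addr0.
Qed.

Lemma symp_nondeg n (p p' : pauli n) : (forall s, symp p s = symp p' s) -> p = p'.
Proof.
move=> H; apply/matrixP => i k; rewrite (ord1 i).
case: (splitP k) => j Hk.
  have -> : k = lshift n j by apply: val_inj.
  by rewrite -!symp_delta_r H.
have -> : k = rshift n j by apply: val_inj.
by rewrite -!symp_delta_l H.
Qed.

Definition Cliff n (U : 'M[algC]_(2 ^ n)) :=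
  U \in unitmx /\ forall p : pauli n, exists q : pauli n, exists a : algC,
     U *m pmx p *m invmx U = a *: pmx q.

Lemma mx1_neq0 n : (1%:M : 'M[algC]_(2 ^ n)) != 0.
Proof.
have [k _] := exists_idx (fun _ : 'I_n => false).
by apply/eqP => /matrixP /(_ k k); rewrite !mxE eqxx /= => /eqP; rewrite oner_eq0.
Qed.

Lemma unitmx_neq0 n (M : 'M[algC]_(2 ^ n)) : M \in unitmx -> M != 0.
Proof.
move=> Mu; apply/eqP => M0; move: (mulmxV Mu); rewrite M0 mul0mx => /esym /eqP.
by rewrite (negbTE (mx1_neq0 n)).
Qed.

Lemma prop_of n (M : 'M[algC]_(2 ^ n)) q a : M = a *: pmx q -> proportional M (pmx q).
Proof.
move=> ->; rewrite /proportional -scalemxAr pmx_sq mxtraceZ mxtrace1 mulfK //.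
by rewrite pnatr_eq0 expn_eq0.
Qed.

Lemma propE n (M : 'M[algC]_(2 ^ n)) q : proportional M (pmx q) -> exists a, M = a *: pmx q.
Proof. by move/eqP => E; eexists; exact: E. Qed.

Lemma conjP_spec n (U : 'M[algC]_(2 ^ n)) p : Cliff U ->
  exists2 a, a != 0 & U *m pmx p *m invmx U = a *: pmx (conjP U p).
Proof.
case=> Uu HU; rewrite /conjP; case: pickP => [q Hq | H] /=.
  have [a Ha] := propE Hq; exists a => //.
  apply/eqP => a0; move: Ha; rewrite a0 scale0r => /eqP.
  apply/negP; apply: unitmx_neq0.
  by rewrite !unitmx_mul Uu pmx_unit unitmx_inv Uu.
have [q [a Ha]] := HU p; move: (H q); rewrite (prop_of Ha) //.
Qed.

Lemma invmx_uniq n (A B : 'M[algC]_(2 ^ n)) : A \in unitmx -> A *m B = 1%:M -> invmx A = B.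
Proof.
move=> Au AB; by rewrite -[invmx A]mulmx1 -AB mulmxA mulVmx // mul1mx.
Qed.

Lemma invmxMx n (A B : 'M[algC]_(2 ^ n)) : A \in unitmx -> B \in unitmx ->
  invmx (A *m B) = invmx B *m invmx A.
Proof.
move=> Au Bu; apply: invmx_uniq; first by rewrite unitmx_mul Au Bu.
by rewrite mulmxA -(mulmxA A) mulmxV // mulmx1 mulmxV.
Qed.

Lemma Cliff1 n : Cliff (1%:M : 'M[algC]_(2 ^ n)).
Proof.
split; first exact: unitmx1.
by move=> p; exists p, 1; rewrite invmx1 mul1mx mulmx1 scale1r.
Qed.

Lemma CliffM n (U V : 'M[algC]_(2 ^ n)) : Cliff U -> Cliff V -> Cliff (U *m V).
Proof.
move=> [Uu HU] [Vu HV]; split; first by rewrite unitmx_mul Uu Vu.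
move=> p; have [q [b Hb]] := HV p; have [r [a Ha]] := HU q.
exists r, (b * a).
rewrite invmxMx //.
have -> : U *m V *m pmx p *m (invmx V *m invmx U) = U *m (V *m pmx p *m invmx V) *m invmx U.
  by rewrite !mulmxA.
by rewrite Hb -scalemxAr -scalemxAl Ha scalerA.
Qed.

Lemma sgF_inj (x y : 'F_2) : sgF x = sgF y -> x = y.
Proof.
have h : (-1 : algC) != 1.
  apply/eqP => /eqP; rewrite -subr_eq0 -opprD oppr_eq0 => h.
  by move: (pnatr_eq0 algC 2); rewrite h.
case: (F2_cases x) => ->; case: (F2_cases y) => -> //; rewrite /sgF /sgnC /= => E.
  by move: h; rewrite -E eqxx.
by move: h; rewrite E eqxx.
Qed.

Lemma conj_mul n (U A B : 'M[algC]_(2 ^ n)) : U \in unitmx ->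
  U *m (A *m B) *m invmx U = (U *m A *m invmx U) *m (U *m B *m invmx U).
Proof.
move=> Uu; by rewrite !mulmxA -[U *m A *m invmx U *m U]mulmxA mulVmx // mulmx1.
Qed.

Lemma symp_conj n (U : 'M[algC]_(2 ^ n)) p q r s a b : U \in unitmx ->
  a != 0 -> b != 0 ->
  U *m pmx p *m invmx U = a *: pmx q -> U *m pmx r *m invmx U = b *: pmx s ->
  symp q s = symp p r.
Proof.
move=> Uu a0 b0 Hp Hr.
have E1 : U *m (pmx p *m pmx r) *m invmx U = (a * b) *: (pmx q *m pmx s).
  by rewrite conj_mul // Hp Hr -scalemxAr -scalemxAl scalerA mulrC.
have E2 : U *m (pmx r *m pmx p) *m invmx U = (a * b) *: (pmx s *m pmx q).
  by rewrite conj_mul // Hr Hp -scalemxAr -scalemxAl scalerA.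
move: E1; rewrite pmx_comm -scalemxAr -scalemxAl E2 scalerA (pmx_comm q s) scalerA => E.
have X0 : (pmx s *m pmx q) != 0.
  by apply: unitmx_neq0; rewrite unitmx_mul !pmx_unit.
apply: sgF_inj; apply/eqP; move: E => /eqP; rewrite -subr_eq0 -scalerBl scalemx_eq0.
rewrite (negbTE X0) orbF [_ * sgF _]mulrC -mulrBl !mulf_eq0 (negbTE a0) (negbTE b0) !orbF.
by rewrite subr_eq0 eq_sym.
Qed.

Lemma conjP_injective n (U : 'M[algC]_(2 ^ n)) : Cliff U -> injective (conjP U).
Proof.
move=> HU p p' E; have Uu := HU.1; apply: symp_nondeg => s.
have [a a0 Ha] := conjP_spec p HU; have [a' a'0 Ha'] := conjP_spec p' HU.
have [c c0 Hc] := conjP_spec s HU.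
by rewrite -(symp_conj Uu a0 c0 Ha Hc) -(symp_conj Uu a'0 c0 Ha' Hc) E.
Qed.

Lemma CliffV n (U : 'M[algC]_(2 ^ n)) : Cliff U -> Cliff (invmx U).
Proof.
move=> HU; have Uu := HU.1; split; first by rewrite unitmx_inv.
move=> R; have [g Hg1 Hg2] := injF_bij (conjP_injective HU).
have [a a0 Ha] := conjP_spec (g R) HU; rewrite Hg2 in Ha.
exists (g R), a^-1; rewrite invmxK.
have -> : pmx R = a^-1 *: (U *m pmx (g R) *m invmx U) by rewrite Ha scalerA mulVf // scale1r.
rewrite -scalemxAr -scalemxAl; congr (_ *: _).
by rewrite !mulmxA mulVmx // mul1mx -mulmxA mulVmx // mulmx1.
Qed.

Lemma conjP_symp n (U : 'M[algC]_(2 ^ n)) p R : Cliff U ->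
  symp (conjP U p) R = symp p (conjP (invmx U) R).
Proof.
move=> HU; have Uu := HU.1.
have [a a0 Ha] := conjP_spec p HU.
have [b b0 Hb] := conjP_spec R (CliffV HU); rewrite invmxK in Hb.
have Hr : U *m pmx (conjP (invmx U) R) *m invmx U = b^-1 *: pmx R.
  have -> : pmx (conjP (invmx U) R) = b^-1 *: (invmx U *m pmx R *m U) by rewrite Hb scalerA mulVf // scale1r.
  rewrite -scalemxAr -scalemxAl; congr (_ *: _).
  by rewrite !mulmxA mulmxV // mul1mx -mulmxA mulmxV // mulmx1.
by apply: (symp_conj Uu a0 _ Ha Hr); rewrite invr_eq0.
Qed.

Lemma pmx_inj n (x y : pauli n) c d : c != 0 -> d != 0 -> c *: pmx x = d *: pmx y -> x = y.
Proof.
move=> c0 d0 E; apply: symp_nondeg => s; apply/esym.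
have U1 : (1%:M : 'M[algC]_(2 ^ n)) \in unitmx by exact: unitmx1.
have Hx : 1%:M *m pmx x *m invmx 1%:M = (c^-1 * d) *: pmx y.
  by rewrite invmx1 mul1mx mulmx1 -scalerA -E scalerA mulVf // scale1r.
have Hs : 1%:M *m pmx s *m invmx 1%:M = 1 *: pmx s by rewrite invmx1 mul1mx mulmx1 scale1r.
by apply: (symp_conj U1 _ (oner_neq0 _) Hx Hs); rewrite mulf_neq0 ?invr_eq0.
Qed.

Lemma conjP_add n (U : 'M[algC]_(2 ^ n)) p q : Cliff U ->
  conjP U (p + q) = conjP U p + conjP U q.
Proof.
move=> HU; have Uu := HU.1.
have [a a0 Ha] := conjP_spec p HU; have [b b0 Hb] := conjP_spec q HU.
have [c c0 Hc] := conjP_spec (p + q) HU.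
have E : pmx (p + q) = (pscal p q)^-1 *: (pmx p *m pmx q).
  by rewrite pmx_mul scalerA mulVf ?pscal_neq0 // scale1r.
move: Hc; rewrite E -scalemxAr -scalemxAl conj_mul // Ha Hb -scalemxAr -scalemxAl pmx_mul !scalerA => Hc.
apply: (pmx_inj c0 _ (esym Hc)).
by apply: mulf_neq0; [apply: mulf_neq0; [rewrite invr_eq0 pscal_neq0 | exact: mulf_neq0] | exact: pscal_neq0].
Qed.

Lemma conjP0 n (U : 'M[algC]_(2 ^ n)) : Cliff U -> conjP U 0 = 0.
Proof.
move=> HU; have E := conjP_add 0 0 HU; rewrite addr0 in E.
by apply: (addrI (conjP U 0)); rewrite addr0 -E.
Qed.

Lemma clifford_Cliff n (A : {set 'I_n}) U : clifford_gate A U -> Cliff U.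
Proof.
case=> HU Hp _; have Uu := (mulmx1_unit HU).1; split => // p.
by have [q /propE [a Ha]] := Hp p; exists q, a.
Qed.

Lemma foldl_Cliff n l (s : seq (nat * op n)) (M : 'M[algC]_(2 ^ n)) : Cliff M ->
  (forall i A U, (i < size s)%N -> (nth (0%N, Meas false 0) s i).2 = Gate A U -> clifford_gate A U) ->
  Cliff (foldl (fun M o => match o with
                    | (l', Gate _ U) => if l' == l then U *m M else M
                    | _ => M end) M s).
Proof.
elim: s M => [|[l' o] s IH] M HM Hs //=.
apply: IH; last by move=> i A U Hi; apply: (Hs i.+1).
case: o Hs => // A U Hs; case: eqP => // _.
by apply: CliffM => //; apply: (clifford_Cliff (A := A)); apply: (Hs 0%N).
Qed.

Lemma Ulev_Cliff n (C : circuit n) l : wf_circuit C -> Cliff (Ulev C l).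
Proof.
case=> _ _ _ H; apply: foldl_Cliff; first exact: Cliff1.
by move=> i A U Hi E; apply: (H i A U Hi E).
Qed.

Definition rw n (C : circuit n) (X : stop C) (k : nat) : pauli n := row (inord k) X.

Lemma rw_back_step n (C : circuit n) l (G : stop C) k : (k <= depth C)%N ->
  rw (back_step l G) k =
  if k == l.-1 then rw G k + conjP (invmx (Ulev C l)) (rw G l) else rw G k.
Proof. by move=> Hk; rewrite /rw /back_step rowK inordK. Qed.

Definition Hb n (C : circuit n) (F : stop C) (t : nat) : stop C :=
  foldr (fun l G => back_step l G) F (iota ((depth C).+1 - t) t).

Lemma HbS n (C : circuit n) (F : stop C) t : (t < depth C)%N ->
  Hb F t.+1 = back_step (depth C - t) (Hb F t).
Proof.
move=> Ht; rewrite /Hb subSS /=; congr (back_step _ (foldr _ _ (iota _ _))).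
by rewrite subSn // ltnW.
Qed.

Lemma backcum_Hb n (C : circuit n) (F : stop C) : backcum F = Hb F (depth C).
Proof. by rewrite /backcum foldl_rev /Hb subSnn. Qed.

Lemma Hb_low n (C : circuit n) (F : stop C) t k : (t <= depth C)%N -> (k + t < depth C)%N ->
  rw (Hb F t) k = rw F k.
Proof.
elim: t => [|t IH] Ht Hk; first by [].
rewrite HbS ?rw_back_step; try lia.
have -> : (k == (depth C - t).-1) = false by apply/eqP; lia.
by apply: IH; lia.
Qed.

Lemma Hb_high n (C : circuit n) (F : stop C) t t' k : (t <= t')%N -> (t' <= depth C)%N ->
  (depth C <= k + t)%N -> (k <= depth C)%N -> rw (Hb F t') k = rw (Hb F t) k.
Proof.
elim: t' => [|t' IH] Htt' Ht' Hk Hk'.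
  by have -> : t = 0%N by lia.
case: (eqVneq t t'.+1) => [->//|ne].
rewrite HbS ?rw_back_step; try lia.
have -> : (k == (depth C - t').-1) = false by apply/eqP; lia.
by apply: IH; lia.
Qed.

Lemma backcum_top n (C : circuit n) (F : stop C) : rw (backcum F) (depth C) = rw F (depth C).
Proof. by rewrite backcum_Hb (@Hb_high _ _ _ 0%N) //; lia. Qed.

Lemma backcum_row n (C : circuit n) (F : stop C) k : (k < depth C)%N ->
  rw (backcum F) k = rw F k + conjP (invmx (Ulev C k.+1)) (rw (backcum F) k.+1).
Proof.
move=> Hk; rewrite backcum_Hb.
rewrite (@Hb_high _ _ _ (depth C - k)); try lia.
have -> : (depth C - k = (depth C - k.+1).+1)%N by lia.
rewrite HbS; last lia.
rewrite rw_back_step; last lia.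
have -> : (depth C - (depth C - k.+1) = k.+1)%N by lia.
rewrite eqxx Hb_low; try lia.
by rewrite (@Hb_high _ _ _ (depth C - k.+1) (depth C)); try lia.
Qed.

Lemma rowD' m k (i : 'I_m) (X Y : 'M['F_2]_(m, k)) : row i (X + Y) = row i X + row i Y.
Proof. by apply/rowP => j; rewrite !mxE. Qed.
Lemma rowZ' m k (i : 'I_m) (a : 'F_2) (X : 'M['F_2]_(m, k)) : row i (a *: X) = a *: row i X.
Proof. by apply/rowP => j; rewrite !mxE. Qed.
Lemma row0' m k (i : 'I_m) : row i (0 : 'M['F_2]_(m, k)) = 0.
Proof. by apply/rowP => j; rewrite !mxE. Qed.

Lemma F2_add_self (a : 'F_2) : a + a = 0.
Proof. by case: (F2_cases a) => ->; [rewrite addr0 | apply: val_inj]. Qed.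
Lemma pauli_add_self n (p : pauli n) : p + p = 0.
Proof. by apply/rowP => j; rewrite !mxE F2_add_self. Qed.

Lemma st_sympDl n (C : circuit n) (X Y Z : stop C) : st_symp (X + Y) Z = st_symp X Z + st_symp Y Z.
Proof. by rewrite /st_symp -big_split; apply: eq_bigr => k _; rewrite rowD' sympDl. Qed.
Lemma st_sympZl n (C : circuit n) a (X Z : stop C) : st_symp (a *: X) Z = a * st_symp X Z.
Proof. by rewrite /st_symp mulr_sumr; apply: eq_bigr => k _; rewrite rowZ' sympZl. Qed.
Lemma st_symp0l n (C : circuit n) (Z : stop C) : st_symp 0 Z = 0.
Proof. by rewrite /st_symp big1 // => k _; rewrite row0' symp0l. Qed.
Lemma st_symp_sum n (C : circuit n) I (r : seq I) (P : pred I) (F : I -> stop C) (Z : stop C) :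
  st_symp (\sum_(i <- r | P i) F i) Z = \sum_(i <- r | P i) st_symp (F i) Z.
Proof.
apply: (big_rec2 (fun A b => st_symp A Z = b)); first exact: st_symp0l.
by move=> i A b _ <-; rewrite st_sympDl.
Qed.

Lemma row_eta n (C : circuit n) k P (i : 'I_(depth C).+1) :
  row i (etaST C k P) = if (i == k :> nat) then P else 0.
Proof. by rewrite rowK. Qed.

Lemma st_symp_eta n (C : circuit n) k P (Y : stop C) : (k <= depth C)%N ->
  st_symp (etaST C k P) Y = symp P (rw Y k).
Proof.
move=> Hk; rewrite /st_symp (bigD1 (inord k)) //= big1 ?addr0.
  by rewrite row_eta inordK ?eqxx.
move=> i Hi; rewrite row_eta; case: eqP => [E|_]; last by rewrite symp0l.
by case/eqP: Hi; apply: val_inj; rewrite /= inordK.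
Qed.

Lemma st_symp_Gop n (C : circuit n) P l (F : stop C) : wf_circuit C ->
  (1 <= l <= depth C)%N ->
  st_symp (Gop C P l) (backcum F) = symp P (rw F l.-1).
Proof.
move=> wf /andP[H1 H2]; rewrite /Gop st_sympDl !st_symp_eta //; last by lia.
rewrite backcum_row; last by lia.
have -> : (l.-1).+1 = l by lia.
rewrite sympDr conjP_symp; last exact: Ulev_Cliff. by rewrite -(addrA (symp P (rw F l.-1))) F2_add_self addr0.
Qed.

Lemma st_symp_top n (C : circuit n) P (F : stop C) :
  st_symp (etaST C (depth C) P) (backcum F) = symp P (rw F (depth C)).
Proof. by rewrite st_symp_eta // backcum_top. Qed.

Fixpoint fwd n (C : circuit n) (X : stop C) (k : nat) : pauli n :=
  match k with
  | 0 => rw X 0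
  | k'.+1 => rw X k'.+1 + conjP (Ulev C k'.+1) (fwd X k')
  end.

Definition Rm n (C : circuit n) (X : stop C) (m : nat) : stop C :=
  \matrix_(k < (depth C).+1)
    (if (k < m)%N then 0 else if (k == m :> nat) then fwd X m else row k X).

Lemma row_Gop n (C : circuit n) P l (i : 'I_(depth C).+1) :
  row i (Gop C P l) = (if (i == l.-1 :> nat) then P else 0) +
                      (if (i == l :> nat) then conjP (Ulev C l) P else 0).
Proof. by rewrite /Gop rowD' !row_eta. Qed.

Lemma dec_step n (C : circuit n) (X : stop C) m : (m < depth C)%N ->
  Rm X m = Gop C (fwd X m) m.+1 + Rm X m.+1.
Proof.
move=> Hm; apply/row_matrixP => i; rewrite rowD' row_Gop /Rm !rowK /=.
have [Hlt|Hge] := ltnP i m.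
  have -> : (i == m :> nat) = false by apply/eqP; lia.
  have -> : (i == m.+1 :> nat) = false by apply/eqP; lia.
  by rewrite ltnS ltnW // !addr0.
case: (eqVneq (i : nat) m) => [E|ne].
  have -> : (i == m.+1 :> nat) = false by apply/eqP; lia.
  have -> : (i < m.+1)%N = true by lia.
  by rewrite !addr0.
have -> : (i < m.+1)%N = false by apply/negbTE; lia.
rewrite add0r.
case: (eqVneq (i : nat) m.+1) => [E|ne']; last by rewrite add0r.
rewrite /= /rw.
have -> : inord m.+1 = i by apply: val_inj; rewrite /= inordK // -E.
by rewrite addrCA pauli_add_self addr0.
Qed.

Lemma dec_gen n (C : circuit n) (X : stop C) m : (m <= depth C)%N ->
  X = \sum_(l < m) Gop C (fwd X l) l.+1 + Rm X m.
Proof.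
elim: m => [|m IH] Hm.
  rewrite big_ord0 add0r; apply/row_matrixP => i; rewrite /Rm rowK /= /rw.
  by case: eqP => // E; congr row; apply: val_inj; rewrite /= inordK.
by rewrite big_ord_recr /= -addrA -dec_step // -IH // ltnW.
Qed.

Lemma dec n (C : circuit n) (X : stop C) :
  X = \sum_(l < depth C) Gop C (fwd X l) l.+1 + etaST C (depth C) (fwd X (depth C)).
Proof.
rewrite {1}(@dec_gen _ _ X (depth C)) //; congr (_ + _).
apply/row_matrixP => i; rewrite /Rm rowK row_eta.
case: ifP => Hi; first by move: Hi; case: eqP => //; lia.
by have -> : (i == depth C :> nat) by have := ltn_ord i; lia.
Qed.

Lemma pair_formula n (C : circuit n) (X F : stop C) : wf_circuit C ->
  st_symp X (backcum F) =
  \sum_(l < depth C) symp (fwd X l) (rw F l) + symp (fwd X (depth C)) (rw F (depth C)).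
Proof.
move=> wf; rewrite {1}(dec X) st_sympDl st_symp_sum st_symp_top; congr (_ + _).
by apply: eq_bigr => l _; rewrite st_symp_Gop //; have := ltn_ord l; lia.
Qed.

Lemma pmap_idx (T U : Type) (g : T -> option U) (x0 : T) (y0 : U) (s : seq T) j :
  (j < size (pmap g s))%N ->
  exists i, (i < size s)%N /\ g (nth x0 s i) = Some (nth y0 (pmap g s) j).
Proof.
elim: s j => [|x s IH] j //=.
case E: (g x) => [y|] /=.
  case: j => [|j] Hj; first by exists 0%N.
  by have [i [Hi Hg]] := IH j Hj; exists i.+1.
by move=> Hj; have [i [Hi Hg]] := IH j Hj; exists i.+1.
Qed.

Lemma pmap_idx2 (T U : Type) (g : T -> option U) (x0 : T) (y0 : U) (s : seq T) j j' :
  (j < j')%N -> (j' < size (pmap g s))%N ->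
  exists i i', [/\ (i < i')%N, (i' < size s)%N,
     g (nth x0 s i) = Some (nth y0 (pmap g s) j) &
     g (nth x0 s i') = Some (nth y0 (pmap g s) j')].
Proof.
elim: s j j' => [|x s IH] j j' //=.
case E: (g x) => [y|] /=.
  case: j => [|j]; case: j' => [|j'] // Hjj' Hj'.
    by have [i [Hi Hg]] := pmap_idx x0 y0 Hj'; exists 0%N, i.+1; split.
  by have [i [i' [? ? ? ?]]] := IH j j' Hjj' Hj'; exists i.+1, i'.+1; split.
by move=> Hjj' Hj'; have [i [i' [? ? ? ?]]] := IH j j' Hjj' Hj'; exists i.+1, i'.+1; split.
Qed.

Definition gmeas n (o : nat * op n) : option (nat * bool * pauli n) :=
  match o.2 with Meas s p => Some (o.1, s, p) | _ => None end.

Lemma meas_idx n (C : circuit n) (j : 'I_(nmeas C)) :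
  exists i, (i < size C)%N /\ nth_op C i = (mlev j, Meas (msgn j) (mpauli j)).
Proof.
have [i [Hi Hg]] := @pmap_idx _ _ (@gmeas n) (0%N, Meas false 0) (0%N, false, 0) C j (ltn_ord j).
exists i; split => //; move: Hg; rewrite /nth_op /mlev /msgn /mpauli /meas_of /gmeas.
by case: (nth _ C i) => l [] // s p [<-].
Qed.

Lemma meas_idx2 n (C : circuit n) (j k : 'I_(nmeas C)) : (j < k)%N ->
  exists i i', [/\ (i < i')%N, (i' < size C)%N,
     nth_op C i = (mlev j, Meas (msgn j) (mpauli j)) &
     nth_op C i' = (mlev k, Meas (msgn k) (mpauli k))].
Proof.
move=> Hjk.
have [i [i' [H1 H2 Hg Hg']]] := @pmap_idx2 _ _ (@gmeas n) (0%N, Meas false 0) (0%N, false, 0) C j k Hjk (ltn_ord k).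
exists i, i'; split => //.
  by move: Hg; rewrite /nth_op /mlev /msgn /mpauli /meas_of /gmeas; case: (nth _ C i) => l [] // s p [<-].
by move: Hg'; rewrite /nth_op /mlev /msgn /mpauli /meas_of /gmeas; case: (nth _ C i') => l [] // s p [<-].
Qed.

Lemma le_depth n (C : circuit n) i : (i < size C)%N -> ((nth_op C i).1 <= depth C)%N.
Proof.
rewrite /nth_op /depth; elim: C i => [|x s IH] i //=.
rewrite big_cons; case: i => [|i] /= Hi; first by apply: leq_maxl.
by apply: leq_trans (IH i Hi) (leq_maxr _ _).
Qed.

Lemma mlev_bounds n (C : circuit n) (j : 'I_(nmeas C)) : wf_circuit C ->
  (1 <= mlev j)%N /\ (mlev j <= depth C)%N.
Proof.
case=> H1 _ _ _; have [i [Hi E]] := meas_idx j.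
by have := H1 i Hi; have := le_depth Hi; rewrite E.
Qed.

Lemma mlev_disjoint n (C : circuit n) (j k : 'I_(nmeas C)) : wf_circuit C ->
  j != k -> mlev j = mlev k -> [disjoint psupp (mpauli j) & psupp (mpauli k)].
Proof.
move=> wf; case: wf => _ _ H3 _.
wlog Hjk : j k / (j < k)%N.
  move=> W ne E; case: (ltngtP j k) => [h|h|h].
  - exact: W.
  - by rewrite disjoint_sym; apply: W => //; rewrite eq_sym.
  - by case/eqP: ne; apply: val_inj.
move=> _ E; have [i [i' [Hii' Hi' Ei Ei']]] := meas_idx2 Hjk.
have := H3 i i'; rewrite Hii' Hi' Ei Ei' /= => /(_ isT E) //.
Qed.

Lemma symp_disjoint n (p q : pauli n) : [disjoint psupp p & psupp q] -> symp p q = 0.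
Proof.
move=> D; rewrite /symp big1 // => j _.
case: (boolP (j \in psupp p)) => Hp.
  have := disjointFr D Hp; rewrite /psupp inE /xbit /zbit => /negbT; rewrite negb_or !negbK => /andP[/eqP-> /eqP->].
  by rewrite !mulr0 addr0.
move: Hp; rewrite /psupp inE /xbit /zbit negb_or !negbK => /andP[/eqP-> /eqP->].
by rewrite !mul0r addr0.
Qed.
Lemma perp_perp (F : fieldType) (k m : nat) (B : 'M[F]_(k, m)) (c : 'rV[F]_m) :
  (forall u : 'rV[F]_m, B *m u^T = 0 -> c *m u^T = 0) -> (c <= B)%MS.
Proof.
move=> H.
set K := kermx B^T.
have HK : B *m K^T = 0 by rewrite -[B]trmxK -trmx_mul mulmx_ker trmx0.
have Hc : c *m K^T = 0.
  apply/matrixP => i j; rewrite [RHS]mxE.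
  have Hj : B *m (row j K)^T = 0.
    by rewrite -[B]trmxK -trmx_mul -row_mul mulmx_ker row0 trmx0.
  transitivity ((c *m (row j K)^T) 0 0); last by rewrite (H _ Hj) mxE.
  by rewrite (ord1 i) !mxE; apply: eq_bigr => l _; rewrite !mxE.
have sB : (B <= kermx K^T)%MS by apply/sub_kermxP.
have sc : (c <= kermx K^T)%MS by apply/sub_kermxP.
apply: (submx_trans sc).
have := mxrank_leqif_sup sB => /leqifP.
rewrite mxrank_ker mxrank_tr /K mxrank_ker mxrank_tr.
have := rank_leq_col B.
case: ifP => // _ Hr /=; lia.
Qed.

Lemma span_ind (K : fieldType) (W : vectType K) (s : seq W) (Pr : W -> Prop) :
  Pr 0 -> (forall x a y, x \in s -> Pr y -> Pr (a *: x + y)) ->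
  forall v, v \in <<s>>%VS -> Pr v.
Proof.
elim: s => [|x s IH] H0 Hs v.
  by rewrite span_nil memv0 => /eqP->.
rewrite span_cons => /memv_addP [y /vlineP [k ->] [z Hz ->]].
apply: (Hs); first by rewrite mem_head.
apply: IH => //; move=> x' a y' Hx' Hy'; apply: Hs => //.
by rewrite in_cons Hx' orbT.
Qed.

Lemma span_lin (K : fieldType) (U W : vectType K) (f : U -> W) (s : seq U) (S : {vspace W}) :
  (forall a x y, f (a *: x + y) = a *: f x + f y) ->
  (forall x, x \in s -> f x \in S) ->
  forall P, P \in <<s>>%VS -> f P \in S.
Proof.
move=> Hl Hs; apply: span_ind.
  have E := Hl 1 0 0; rewrite !scale1r addr0 in E.
  have -> : f 0 = 0 by apply: (addrI (f 0)); rewrite addr0 -E.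
  exact: mem0v.
move=> x a y Hx Hy; rewrite Hl; apply: memvD => //; apply: memvZ; exact: Hs.
Qed.

Lemma row_sum' m k (i : 'I_m) I (r : seq I) (P : pred I) (F : I -> 'M['F_2]_(m, k)) :
  row i (\sum_(j <- r | P j) F j) = \sum_(j <- r | P j) row i (F j).
Proof.
apply: (big_rec2 (fun A b => row i A = b)); first exact: row0'.
by move=> j A b _ <-; rewrite rowD'.
Qed.

Lemma symp_sumr n (p : pauli n) I (r : seq I) (P : pred I) (F : I -> pauli n) :
  symp p (\sum_(j <- r | P j) F j) = \sum_(j <- r | P j) symp p (F j).
Proof.
apply: (big_rec2 (fun A b => symp p A = b)); first exact: symp0r.
by move=> j A b _ <-; rewrite sympDr.
Qed.

Lemma eta_lin n (C : circuit n) k (a : 'F_2) (p q : pauli n) :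
  etaST C k (a *: p + q) = a *: etaST C k p + etaST C k q.
Proof.
apply/row_matrixP => i; rewrite rowD' rowZ' !row_eta.
by case: ifP => _; rewrite ?scaler0 ?addr0.
Qed.

Lemma conjP_lin n (U : 'M[algC]_(2 ^ n)) (a : 'F_2) (p q : pauli n) : Cliff U ->
  conjP U (a *: p + q) = a *: conjP U p + conjP U q.
Proof.
move=> HU; rewrite conjP_add //.
by case: (F2_cases a) => ->; rewrite ?scale0r ?conjP0 ?scale1r.
Qed.

Lemma Gop_lin n (C : circuit n) l (a : 'F_2) (p q : pauli n) : wf_circuit C ->
  Gop C (a *: p + q) l = a *: Gop C p l + Gop C q l.
Proof.
move=> wf; rewrite /Gop conjP_lin; last exact: Ulev_Cliff.
rewrite !eta_lin scalerDr.
by rewrite -!addrA; congr (_ + _); rewrite addrCA.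
Qed.

Lemma Lop_lin n (C : circuit n) Pj (a : 'F_2) (v w : 'rV['F_2]_(nmeas C)) :
  Lop Pj (a *: v + w) = a *: Lop Pj v + Lop Pj w.
Proof.
rewrite /Lop scaler_sumr -big_split; apply: eq_bigr => j _ /=.
by rewrite !mxE scalerDl scalerA.
Qed.

Lemma rw_Fu n (C : circuit n) (u : 'rV['F_2]_(nmeas C)) l : (l <= depth C)%N ->
  rw (Fu u) l = \sum_j u 0 j *: (if ((mlev j).-1 == l) then mpauli j else 0).
Proof.
move=> Hl; rewrite /rw /Fu row_sum'; apply: eq_bigr => j _.
by rewrite rowZ' row_eta inordK ?ltnS // eq_sym.
Qed.

Lemma rw_Fu_top n (C : circuit n) (u : 'rV['F_2]_(nmeas C)) : wf_circuit C ->
  rw (Fu u) (depth C) = 0.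
Proof.
move=> wf; rewrite rw_Fu // big1 // => j _.
have [h1 h2] := mlev_bounds j wf.
have -> : ((mlev j).-1 == depth C) = false by apply/eqP; lia.
by rewrite scaler0.
Qed.

Lemma pair_top n (C : circuit n) (u : 'rV['F_2]_(nmeas C)) P : wf_circuit C ->
  st_symp (etaST C (depth C) P) (backcum (Fu u)) = 0.
Proof. by move=> wf; rewrite st_symp_top rw_Fu_top // symp0r. Qed.

Lemma pair_Gop_Fu n (C : circuit n) (u : 'rV['F_2]_(nmeas C)) P l : wf_circuit C ->
  (1 <= l <= depth C)%N ->
  st_symp (Gop C P l) (backcum (Fu u)) =
  \sum_j u 0 j * (if mlev j == l then symp P (mpauli j) else 0).
Proof.
move=> wf Hl; rewrite st_symp_Gop // rw_Fu; last by lia.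
rewrite symp_sumr; apply: eq_bigr => j _; rewrite sympZr.
have [h1 h2] := mlev_bounds j wf.
have -> : ((mlev j).-1 == l.-1) = (mlev j == l) by apply/eqP/eqP; lia.
by case: ifP; rewrite ?symp0r.
Qed.

Definition dotF2' := dotF2.

Lemma pair_Lop n (C : circuit n) (Pj : 'I_(nmeas C) -> pauli n) (u v : 'rV['F_2]_(nmeas C)) :
  wf_circuit C ->
  (forall j, psupp (Pj j) \subset psupp (mpauli j) /\ symp (Pj j) (mpauli j) = 1) ->
  st_symp (Lop Pj v) (backcum (Fu u)) = dotF2 u v.
Proof.
move=> wf HP; rewrite /Lop st_symp_sum /dotF2; apply: eq_bigr => j _.
rewrite st_sympZl pair_Gop_Fu //; last by have := mlev_bounds j wf; lia.
rewrite (bigD1 j) //= eqxx (HP j).2 mulr1 big1 ?addr0; first by rewrite mulrC.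
move=> k Hk; case: eqP => [E|_]; last by rewrite mulr0.
rewrite symp_disjoint ?mulr0 //.
have D := mlev_disjoint wf Hk E.
by apply: (disjointWl (HP j).1); rewrite disjoint_sym.
Qed.

Definition cvec n (C : circuit n) (X : stop C) : 'rV['F_2]_(nmeas C) :=
  \row_j symp (fwd X (mlev j).-1) (mpauli j).

Lemma pair_cvec n (C : circuit n) (X : stop C) (u : 'rV['F_2]_(nmeas C)) : wf_circuit C ->
  st_symp X (backcum (Fu u)) = dotF2 u (cvec X).
Proof.
move=> wf; rewrite pair_formula // rw_Fu_top // symp0r addr0.
rewrite (eq_bigr (fun l : 'I_(depth C) => \sum_j u 0 j *
   (if (mlev j).-1 == l then symp (fwd X l) (mpauli j) else 0))); last first.
  move=> l _; rewrite rw_Fu; last exact: ltnW.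
  rewrite symp_sumr; apply: eq_bigr => j _; rewrite sympZr.
  by case: ifP; rewrite ?symp0r.
rewrite exchange_big /dotF2; apply: eq_bigr => j _.
rewrite mxE -mulr_sumr; congr (_ * _).
have [h1 h2] := mlev_bounds j wf.
have Hlt : ((mlev j).-1 < depth C)%N by lia.
rewrite (bigD1 (Ordinal Hlt)) //= eqxx big1 ?addr0 // => l Hl.
case: eqP => [E|//].
by case/eqP: Hl; apply: val_inj; rewrite /= E.
Qed.

Lemma dotF2_delta m (a : 'rV['F_2]_m) k : dotF2 (delta_mx 0 k) a = a 0 k.
Proof.
rewrite /dotF2 (bigD1 k) //= big1 ?addr0; first by rewrite mxE !eqxx mul1r.
by move=> i Hi; rewrite mxE (negbTE Hi) andbF mul0r.
Qed.

Lemma dot_nondeg m (a b : 'rV['F_2]_m) : (forall u, dotF2 u a = dotF2 u b) -> a = b.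
Proof. by move=> H; apply/rowP => k; rewrite -!dotF2_delta H. Qed.

Lemma dotF2Dr m (u a b : 'rV['F_2]_m) : dotF2 u (a + b) = dotF2 u a + dotF2 u b.
Proof. by rewrite /dotF2 -big_split; apply: eq_bigr => j _; rewrite mxE mulrDr. Qed.
Lemma dotF2Zr m (u a : 'rV['F_2]_m) c : dotF2 u (c *: a) = c * dotF2 u a.
Proof. by rewrite /dotF2 mulr_sumr; apply: eq_bigr => j _; rewrite mxE mulrCA. Qed.
Lemma dotF20r m (u : 'rV['F_2]_m) : dotF2 u 0 = 0.
Proof. by rewrite /dotF2 big1 // => j _; rewrite mxE mulr0. Qed.

Lemma cvecD n (C : circuit n) (X Y : stop C) : wf_circuit C -> cvec (X + Y) = cvec X + cvec Y.
Proof.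
by move=> wf; apply: dot_nondeg => u; rewrite dotF2Dr -!pair_cvec // st_sympDl.
Qed.

Lemma cvec_Lop n (C : circuit n) (Pj : 'I_(nmeas C) -> pauli n) v : wf_circuit C ->
  (forall j, psupp (Pj j) \subset psupp (mpauli j) /\ symp (Pj j) (mpauli j) = 1) ->
  cvec (Lop Pj v) = v.
Proof. by move=> wf HP; apply: dot_nondeg => u; rewrite -pair_cvec // pair_Lop. Qed.

Lemma mx_add_self m k (A : 'M['F_2]_(m, k)) : A + A = 0.
Proof. by apply/matrixP => i j; rewrite !mxE F2_add_self. Qed.

Unset Implicit Arguments.
Set Strict Implicit.

Theorem mainTheorem15 (n : nat) (C : circuit n)
  (V : {vspace 'rV['F_2]_(nmeas C)})
  (Pj : 'I_(nmeas C) -> pauli n)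
  (b0 : seq (pauli n)) (bl : nat -> seq (pauli n))
  (bv : seq 'rV['F_2]_(nmeas C)) :
  wf_circuit C ->
  (* the outcome code is linear: it is the subspace V *)
  (forall o, o \in V <-> outcome o) ->
  (* the fixed P_j *)
  (forall j, psupp (Pj j) \subset psupp (mpauli j) /\ symp (Pj j) (mpauli j) = 1) ->
  (* bases *)
  basis_of fullv b0 ->
  (forall l, (1 <= l <= depth C)%N ->
     free (bl l) /\ (forall P, P \in <<bl l>>%VS <-> comm_level C l P)) ->
  basis_of V bv ->
  forall X : stop C,
    (forall u : 'rV['F_2]_(nmeas C),
        (forall o, o \in V -> dotF2 u o = 0) ->
        st_symp X (backcum (Fu u)) = 0)
    <->
    X \in <<[seq etaST C (depth C) P | P <- b0]
           ++ flatten [seq [seq Gop C P l | P <- bl l] | l <- iota 1 (depth C)]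
           ++ [seq Lop Pj v | v <- bv]>>%VS.
Proof.
move=> wf _ HP Hb0 Hbl Hbv X.
set S := _ ++ _ ++ _.
have [/eqP HV _] := andP Hbv.
have [/eqP Hfull _] := andP Hb0.
have memS : forall x, x \in S -> x \in <<S>>%VS by move=> x; apply: memv_span.
split.
- move=> H.
  set c := cvec X.
  have Hc : c \in V.
    rewrite -HV.
    have := @perp_perp _ _ _ (\matrix_(i < size bv) bv`_i) c.
    move=> /(_ _) Hsub.
    have : (c <= \matrix_(i < size bv) bv`_i)%MS.
      apply: Hsub => u Hu.
      have Hdot : forall o, o \in V -> dotF2 u o = 0.
        rewrite -HV; apply: span_ind; first exact: dotF20r.
        move=> x a y Hx Hy; rewrite dotF2Dr dotF2Zr Hy addr0.
        have [i Hi ->] : exists2 i, (i < size bv)%N & x = bv`_i.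
          by exists (index x bv); [rewrite index_mem | rewrite nth_index].
        suff -> : dotF2 u bv`_i = 0 by rewrite mulr0.
        transitivity ((\matrix_(i < size bv) bv`_i *m u^T) (Ordinal Hi) 0); last by rewrite Hu mxE.
        by rewrite mxE /dotF2; apply: eq_bigr => k _; rewrite !mxE mulrC.
      have := H u Hdot; rewrite pair_cvec // => E.
      apply/matrixP => i j; rewrite (ord1 i) (ord1 j) !mxE -[RHS]E /dotF2.
      by apply: eq_bigr => k _; rewrite !mxE mulrC.
    move/submxP => [w ->]; rewrite mulmx_sum_row.
    apply: memv_suml => i _; apply: memvZ; rewrite rowK; apply: memv_span.
    exact: mem_nth.
  have HL : Lop Pj c \in <<S>>%VS.
    apply: (span_lin (f := Lop Pj) (s := bv)) => //; first exact: Lop_lin.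
    - move=> x Hx; apply: memS; rewrite !mem_cat; apply/or3P; apply: Or33.
      exact: map_f.
    by rewrite HV.
  set X' := X + Lop Pj c.
  have cX' : cvec X' = 0 by rewrite cvecD // cvec_Lop // mx_add_self.
  have HX' : X' \in <<S>>%VS.
    rewrite (dec X'); apply: memvD.
      apply: memv_suml => l _.
      have Hl : (1 <= l.+1 <= depth C)%N by have := ltn_ord l; lia.
      apply: (span_lin (f := fun P => Gop C P l.+1) (s := bl l.+1)).
      + by move=> a x y; apply: Gop_lin.
      + move=> x Hx; apply: memS; rewrite mem_cat; apply/orP; right.
        rewrite mem_cat; apply/orP; left; apply/flatten_mapP.
        exists l.+1; first by rewrite mem_iota; lia.
        exact: map_f.
      apply/((Hbl _ Hl).2) => j Ej.
      move/rowP: cX' => /(_ j); rewrite !mxE Ej //.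
    apply: (span_lin (f := etaST C (depth C)) (s := b0)).
    + by move=> a x y; apply: eta_lin.
    + by move=> x Hx; apply: memS; rewrite mem_cat map_f.
    by rewrite Hfull memvf.
  have -> : X = X' + Lop Pj c by rewrite /X' -addrA mx_add_self addr0.
  exact: memvD.
- move=> HX u Hu; move: X HX; apply: span_ind; first exact: st_symp0l.
  move=> x a y Hx Hy; rewrite st_sympDl st_sympZl Hy addr0.
  suff -> : st_symp x (backcum (Fu u)) = 0 by rewrite mulr0.
  move: Hx; rewrite !mem_cat => /or3P [/mapP [P _ ->]| /flatten_mapP [l Hl /mapP [P HPl ->]] | /mapP [v Hv ->]].
  + exact: pair_top.
  + have Hl' : (1 <= l <= depth C)%N by move: Hl; rewrite mem_iota; lia.
    rewrite pair_Gop_Fu // big1 // => j _.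
    case: eqP => [Ej|]; last by rewrite mulr0.
    have : P \in <<bl l>>%VS by apply: memv_span.
    by move/((Hbl _ Hl').2) => /(_ j Ej) ->; rewrite mulr0.
  + rewrite pair_Lop //; apply: Hu; rewrite -HV; exact: memv_span.
Qed.
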